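(* Let $p\ge0$ be a fixed integer. Let $V:S^1\to\mathbb{R}$ be of class $C^{k-1,1}(S^1)$ with $k\ge 2p+1$, let $\phi(\theta)=e^{-V(\theta)}$, and let $\pi_n$ be the monic degree-$n$ orthogonal polynomial with respect to $\phi$ on the unit circle. Then \[ \lim_{n\to\infty}\frac{1}{n^p}\cdot\frac{\|\pi_n^{(p)}\|_\phi}{\|\pi_n\|_\phi}=1. \]
   Context: $C^{k-1,1}(S^1)$ denotes functions on the circle whose $2\pi$-periodic extension has $k-1$ Lipschitz continuous derivatives. The inner product is $\langle f,g\rangle_\phi=\frac{1}{2\pi}\int_{-\pi}^{\pi}f(e^{i\theta})\overline{g(e^{i\theta})}\phi(\theta)\,d\theta$, $\|f\|_\phi=\langle f,f\rangle_\phi^{1/2}$, and $\pi_n$ is the monic degree-$n$ polynomial orthogonal to all polynomials of lower degree; $\pi_n^{(p)}$ is its $p$-th derivative. *)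

(* Defs.v *)
From Stdlib Require Import Reals.
From Coquelicot Require Import Coquelicot.
From mathcomp Require Import all_boot all_algebra.
From mathcomp Require Import Rstruct.
From mathcomp.real_closed Require Import complex.

Set Implicit Arguments.
Unset Strict Implicit.
Unset Printing Implicit Defensive.

Definition eit (t : R) : R[i] := Complex (cos t) (sin t).

Definition cconj (z : R[i]) : R[i] := Complex (complex.Re z) (Ropp (complex.Im z)).

(** Real and imaginary parts of
    <f,g>_phi = 1/(2pi) int_{-pi}^{pi} f(e^{it}) conj(g(e^{it})) phi(t) dt. *)
Definition inner_re (phi : R -> R) (f g : {poly R[i]}) : R :=
  Rdiv (RInt (fun t => Rmult (complex.Re (GRing.mul (horner f (eit t)) (cconj (horner g (eit t))))) (phi t))
         (Ropp PI) PI) (Rmult 2 PI).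
Definition inner_im (phi : R -> R) (f g : {poly R[i]}) : R :=
  Rdiv (RInt (fun t => Rmult (complex.Im (GRing.mul (horner f (eit t)) (cconj (horner g (eit t))))) (phi t))
         (Ropp PI) PI) (Rmult 2 PI).

(** ||f||_phi = <f,f>_phi^{1/2} (note <f,f>_phi is real). *)
Definition wnorm (phi : R -> R) (f : {poly R[i]}) : R := sqrt (inner_re phi f f).

Definition monic_OP (phi : R -> R) (n : nat) (P : {poly R[i]}) : Prop :=
  P \is monic /\ size P = n.+1 /\
  (forall Q : {poly R[i]}, (size Q <= n)%N ->
     inner_re phi P Q = 0%R /\ inner_im phi P Q = 0%R).

(** V : R -> R is the 2pi-periodic extension of a function in C^{k-1,1}(S^1):
    V is 2pi-periodic, (k-1) times differentiable on R, and its (k-1)-th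
    derivative is Lipschitz continuous. *)
Definition C_lip_periodic (k : nat) (V : R -> R) : Prop :=
  (forall x, V (Rplus x (Rmult 2 PI)) = V x) /\
  (forall j x, (1 <= j)%N -> (j <= k.-1)%N -> ex_derive_n V j x) /\
  (exists L : R, forall x y,
     Rle (Rabs (Rminus (Derive_n V k.-1 x) (Derive_n V k.-1 y))) (Rmult L (Rabs (Rminus x y)))).

(* Main.v *)
Require Import Defs.
From Stdlib Require Import Reals.
From Coquelicot Require Import Coquelicot.
From mathcomp Require Import all_boot all_algebra.
From mathcomp Require Import Rstruct.
From mathcomp.real_closed Require Import complex.
From Stdlib Require Import Lra Lia.
From Stdlib Require ZArith.
From mathcomp Require Import all_order.

Module H0.
Set Implicit Arguments.
Unset Strict Implicit.
Unset Printing Implicit Defensive.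

Local Open Scope R_scope.
Lemma int_cos (z : Z) : z <> Z0 ->
  RInt (fun t => cos (IZR z * t) * 1) (- PI) PI = 0.
Proof.
move=> hz. have hm : IZR z <> 0 by apply: not_0_IZR.
have hs : sin (IZR z * PI) = 0 by apply: sin_eq_0_1; exists z.
apply: is_RInt_unique.
have -> : 0 = minus ((fun t => sin (IZR z * t) / IZR z) PI) ((fun t => sin (IZR z * t) / IZR z) (- PI)).
  have e1 : sin (IZR z * PI) / IZR z = 0 by rewrite hs /Rdiv Rmult_0_l.
  have e2 : sin (IZR z * - PI) / IZR z = 0 by rewrite Ropp_mult_distr_r_reverse sin_neg hs Ropp_0 /Rdiv Rmult_0_l.
  by rewrite /= e1 e2 minus_eq_zero.
apply: (is_RInt_derive (fun t => sin (IZR z * t) / IZR z)) => x _.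
  auto_derive => //. field. exact hm.
apply: continuous_mult; last by apply: continuous_const.
apply: continuous_cos_comp. apply: continuous_mult; [apply: continuous_const| apply: continuous_id].
Qed.
Lemma int_sin (z : Z) : z <> Z0 ->
  RInt (fun t => sin (IZR z * t) * 1) (- PI) PI = 0.
Proof.
move=> hz. have hm : IZR z <> 0 by apply: not_0_IZR.
apply: is_RInt_unique.
have -> : 0 = minus ((fun t => - cos (IZR z * t) / IZR z) PI) ((fun t => - cos (IZR z * t) / IZR z) (- PI)).
  by rewrite /= Ropp_mult_distr_r_reverse cos_neg minus_eq_zero.
apply: (is_RInt_derive (fun t => - cos (IZR z * t) / IZR z)) => x _.
  auto_derive => //. field. exact hm.
apply: continuous_mult; last by apply: continuous_const.
apply: continuous_sin_comp. apply: continuous_mult; [apply: continuous_const| apply: continuous_id].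
Qed.
Lemma int_one : RInt (fun t => 1 * 1) (- PI) PI = 2 * PI.
Proof. rewrite RInt_const /scal /= /mult /=. ring. Qed.
Lemma twoPI_neq0 : 2 * PI <> 0.
Proof. have := PI_RGT_0; lra. Qed.

Lemma int_cos0 : RInt (fun t => cos (0 * t) * 1) (-PI) PI = 2 * PI.
Proof. by rewrite -int_one; apply: RInt_ext => x _; rewrite Rmult_0_l cos_0. Qed.
Lemma int_sin0 : RInt (fun t => sin (0 * t) * 1) (-PI) PI = 0.
Proof.
rewrite (RInt_ext _ (fun _ => 0)) ?RInt_const; first by rewrite /scal /= /mult /= Rmult_0_r.
by move=> x _; rewrite Rmult_0_l sin_0 Rmult_0_l.
Qed.
Lemma div2PI_self : (2 * PI) / (2 * PI) = 1.
Proof. by rewrite /Rdiv Rinv_r //; exact: twoPI_neq0. Qed.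
Lemma div2PI_0 : 0 / (2 * PI) = 0.
Proof. by rewrite /Rdiv Rmult_0_l. Qed.
Lemma div2PI_le x y : x <= y -> x / (2 * PI) <= y / (2 * PI).
Proof.
move=> H; apply: Rmult_le_compat_r => //; left; apply: Rinv_0_lt_compat.
have := PI_RGT_0; lra.
Qed.
Lemma mPI_le_PI : - PI <= PI.
Proof. have := PI_RGT_0; lra. Qed.

Lemma lip_cont (f : R -> R) (L : R) :
  (forall x y, Rabs (f x - f y) <= L * Rabs (x - y)) -> forall x, continuous f x.
Proof.
move=> HL x; apply/continuity_pt_filterlim => eps heps.
have hL1 : 0 < Rabs L + 1 by have := Rabs_pos L; lra.
have hd : 0 < eps / (Rabs L + 1) by apply: Rdiv_lt_0_compat.
exists (eps / (Rabs L + 1)); split => //.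
move=> y [_ hy]; have hy' : Rabs (y - x) < eps / (Rabs L + 1) by exact: hy.
rewrite /R_dist /=.
have h1 := HL y x.
have h2 : L * Rabs (y - x) <= Rabs L * Rabs (y - x).
  apply: Rmult_le_compat_r; [apply: Rabs_pos | apply: Rle_abs].
have h3 : Rabs L * Rabs (y - x) <= Rabs L * (eps / (Rabs L + 1)).
  apply: Rmult_le_compat_l; [apply: Rabs_pos | lra].
have e : Rabs L * (eps / (Rabs L + 1)) = eps - eps / (Rabs L + 1).
  by field; apply: Rgt_not_eq.
rewrite /Rdist; lra.
Qed.

Lemma V_cont (k : nat) (V : R -> R) : (1 <= k)%N -> C_lip_periodic k V -> forall x, continuous V x.
Proof.
move=> hk [_ [Hd [L HL]]] x.
case: k hk Hd HL => [//|[|k]] _ Hd HL.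
  exact: (lip_cont HL).
apply: (ex_derive_continuous V).
exact: (Hd 1%N x).
Qed.

Lemma weight_bounds (V : R -> R) : (forall x, continuous V x) ->
  exists a b, 0 < a /\ forall t, - PI <= t -> t <= PI -> a <= exp (- V t) <= b.
Proof.
move=> HV.
have hc : forall c, - PI <= c <= PI -> continuity_pt V c.
  by move=> c _; apply/continuity_pt_filterlim; apply: HV.
have [Mx [HM _]] := continuity_ab_maj V (- PI) PI mPI_le_PI hc.
have [mx [Hm _]] := continuity_ab_min V (- PI) PI mPI_le_PI hc.
exists (exp (- V Mx)), (exp (- V mx)); split; first exact: exp_pos.
move=> t h1 h2; have := HM t (conj h1 h2); have := Hm t (conj h1 h2) => hm hM.
split.
  case: (Req_dec (V t) (V Mx)) => e; first by rewrite e; lra.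
  left; apply: exp_increasing; lra.
case: (Req_dec (V t) (V mx)) => e; first by rewrite e; lra.
left; apply: exp_increasing; lra.
Qed.

Lemma nat_unbounded (r : R) : exists M : nat, r < INR M.
Proof.
have [hz|hz] := Z.lt_ge_cases (up r) Z0.
  exists 0%N; have [h1 _] := archimed r; have := IZR_lt _ _ hz; simpl; lra.
exists (Z.to_nat (up r)); rewrite INR_IZR_INZ Znat.Z2Nat.id //.
by have [h1 _] := archimed r; lra.
Qed.

Lemma cauchy_decr (u : nat -> R) : (forall n, u (S n) <= u n) -> (forall n, 0 <= u n) ->
  forall d, 0 < d -> exists N, forall n, (N <= n)%N -> u N - u n <= d.
Proof.
move=> hdec hpos d hd.
have hg : Un_growing (fun n => - u n) by move=> n; have := hdec n; lra.
have hb : has_ub (fun n => - u n).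
  by exists 0 => x [i ->]; have := hpos i; lra.
have [l hl] := growing_cv _ hg hb.
have hd2 : d / 2 > 0 by lra.
have [N HN] := hl _ hd2.
exists N => n hn.
have h1 := HN n (elimT leP hn); have h2 := HN N (le_n N).
rewrite /Rdist in h1 h2.
have := Rabs_def2 _ _ h1; have := Rabs_def2 _ _ h2.
move=> [h3 h4] [h5 h6]; lra.
Qed.
Lemma mPI_le_0 : - PI <= 0.
Proof. have := PI_RGT_0; lra. Qed.
Lemma zero_le_PI : 0 <= PI.
Proof. have := PI_RGT_0; lra. Qed.

Lemma w_cont (V : R -> R) : (forall x, continuous V x) -> forall x, continuous (fun t => exp (Ropp (V t))) x.
Proof.
move=> HV x; apply: continuous_exp_comp.
exact: (continuous_opp V x (HV x)).
Qed.

End H0.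
Import H0.

From mathcomp Require Import ring lra.

Module H1.
Set Implicit Arguments.
Unset Strict Implicit.
Unset Printing Implicit Defensive.
Notation cRe := complex.Re.
Notation cIm := complex.Im.

Import GRing.Theory Num.Theory.

Local Open Scope ring_scope.

Lemma cRe_add (a b : R[i]) : cRe (a + b) = cRe a + cRe b. Proof. by case: a; case: b. Qed.
Lemma cIm_add (a b : R[i]) : cIm (a + b) = cIm a + cIm b. Proof. by case: a; case: b. Qed.
Lemma cRe_mul (a b : R[i]) : cRe (a * b) = cRe a * cRe b - cIm a * cIm b. Proof. by case: a; case: b. Qed.
Lemma cIm_mul (a b : R[i]) : cIm (a * b) = cRe a * cIm b + cIm a * cRe b. Proof. by case: a; case: b. Qed.
Lemma cRe_conj (a : R[i]) : cRe (conjc a) = cRe a. Proof. by case: a. Qed.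
Lemma cIm_conj (a : R[i]) : cIm (conjc a) = - cIm a. Proof. by case: a. Qed.
Lemma cconjE (a : R[i]) : cconj a = conjc a. Proof. by case: a. Qed.
Lemma cRe_opp (a : R[i]) : cRe (- a) = - cRe a. Proof. by case: a. Qed.
Lemma cIm_opp (a : R[i]) : cIm (- a) = - cIm a. Proof. by case: a. Qed.

Lemma eit_mul (s t : R) : eit s * eit t = eit (s + t).
Proof.
rewrite /eit /= cosD sinD; congr Complex; ring.
Qed.

Lemma eit0 : eit 0 = 1.
Proof. by rewrite /eit cos_0 sin_0. Qed.

Lemma eit_conj (t : R) : conjc (eit t) = eit (- t).
Proof. by rewrite /eit /= -RoppE cos_neg sin_neg. Qed.

Lemma eit_exp (t : R) (n : nat) : eit t ^+ n = eit (n%:R * t).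
Proof.
elim: n => [|n IH].
  by rewrite expr0 -eit0; congr eit; rewrite RmultE mulr0n mul0r.
by rewrite exprS IH eit_mul; congr eit; rewrite !RmultE RplusE mulrSr; ring.
Qed.

Lemma eit_norm (t : R) : eit t * conjc (eit t) = 1.
Proof. by rewrite eit_conj eit_mul Rplus_opp_r eit0. Qed.

Import GRing.Theory Num.Theory.
Local Open Scope ring_scope.

Definition Cont (f : R -> R) := forall t, continuous f t.

Lemma Cont_plus f g : Cont f -> Cont g -> Cont (fun t => f t + g t).
Proof. by move=> Hf Hg t; apply: (continuous_plus f g). Qed.
Lemma Cont_mult f g : Cont f -> Cont g -> Cont (fun t => f t * g t).
Proof. by move=> Hf Hg t; apply: (continuous_mult f g). Qed.
Lemma Cont_opp f : Cont f -> Cont (fun t => - f t).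
Proof. by move=> Hf t; apply: (continuous_opp f). Qed.
Lemma Cont_sub f g : Cont f -> Cont g -> Cont (fun t => f t - g t).
Proof. by move=> Hf Hg; apply: Cont_plus => //; apply: Cont_opp. Qed.
Lemma Cont_const c : Cont (fun _ => c).
Proof. by move=> t; apply: continuous_const. Qed.
Lemma Cont_cos : Cont cos. Proof. exact: continuous_cos. Qed.
Lemma Cont_sin : Cont sin. Proof. exact: continuous_sin. Qed.

Section Integrals.
Variable phi : R -> R.
Hypothesis Hphi : Cont phi.

Definition rint (f : R -> R) : R :=
  Rdiv (RInt (fun t => Rmult (f t) (phi t)) (Ropp PI) PI) (Rmult 2 PI).

Lemma ex_rint f : Cont f -> ex_RInt (fun t => Rmult (f t) (phi t)) (Ropp PI) PI.
Proof.
move=> Hf; apply: ex_RInt_continuous => z _.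
exact: (Cont_mult Hf Hphi).
Qed.

Lemma rint_ext f g : (forall t, f t = g t) -> rint f = rint g.
Proof. by move=> H; rewrite /rint; congr Rdiv; apply: RInt_ext => x _; rewrite H. Qed.

Lemma rint_plus f g : Cont f -> Cont g -> rint (fun t => f t + g t) = rint f + rint g.
Proof.
move=> Hf Hg; rewrite /rint.
have -> : RInt (fun t => Rmult (f t + g t) (phi t)) (Ropp PI) PI
  = RInt (fun t => plus (Rmult (f t) (phi t)) (Rmult (g t) (phi t))) (Ropp PI) PI.
  by apply: RInt_ext => x _; rewrite /plus /= !RmultE RplusE mulrDl.
rewrite RInt_plus; try exact: ex_rint.
by rewrite /plus /= !RdivE RplusE mulrDl.
Qed.

Lemma rint_scal c f : Cont f -> rint (fun t => c * f t) = c * rint f.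
Proof.
move=> Hf; rewrite /rint.
have -> : RInt (fun t => Rmult (c * f t) (phi t)) (Ropp PI) PI
  = RInt (fun t => scal c (Rmult (f t) (phi t))) (Ropp PI) PI.
  by apply: RInt_ext => x _; rewrite /scal /= /mult /= !RmultE mulrA.
rewrite RInt_scal; last exact: ex_rint.
by rewrite /scal /= /mult /= !RdivE !RmultE mulrA.
Qed.

Lemma rint0 : rint (fun _ => 0) = 0.
Proof.
rewrite (rint_ext (g := fun t => 0 * 0)); last by move=> t /=; rewrite mul0r.
by rewrite rint_scal ?mul0r //; apply: Cont_const.
Qed.

Definition good (h : R -> R[i]) := Cont (fun t => cRe (h t)) /\ Cont (fun t => cIm (h t)).

Definition cint (h : R -> R[i]) : R[i] :=
  Complex (rint (fun t => cRe (h t))) (rint (fun t => cIm (h t))).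

Lemma cint_ext h1 h2 : (forall t, h1 t = h2 t) -> cint h1 = cint h2.
Proof. by move=> H; rewrite /cint; congr Complex; apply: rint_ext => t; rewrite H. Qed.

Lemma cint_add h1 h2 : good h1 -> good h2 -> cint (fun t => h1 t + h2 t) = cint h1 + cint h2.
Proof.
move=> [H1 H1'] [H2 H2']; rewrite /cint.
rewrite (rint_ext (f := fun t => cRe (h1 t + h2 t)) (g := fun t => cRe (h1 t) + cRe (h2 t)));
  last by move=> t /=; rewrite cRe_add.
rewrite (rint_ext (f := fun t => cIm (h1 t + h2 t)) (g := fun t => cIm (h1 t) + cIm (h2 t)));
  last by move=> t /=; rewrite cIm_add.
by rewrite !rint_plus.
Qed.

Lemma cint_cmul c h : good h -> cint (fun t => c * h t) = c * cint h.
Proof.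
move=> [H1 H2]; rewrite /cint.
rewrite (rint_ext (f := fun t => cRe (c * h t))
   (g := fun t => cRe c * cRe (h t) + (- cIm c) * cIm (h t)));
  last by move=> t /=; rewrite cRe_mul; ring.
rewrite (rint_ext (f := fun t => cIm (c * h t))
   (g := fun t => cRe c * cIm (h t) + cIm c * cRe (h t)));
  last by move=> t /=; rewrite cIm_mul.
rewrite !rint_plus ?rint_scal //; try (by move=> t; apply: (continuous_mult (fun _ => _)); 
   [apply: continuous_const | ]).
case: c => c1 c2 /=; congr Complex; ring.
Qed.

Lemma cint_conj h : good h -> cint (fun t => conjc (h t)) = conjc (cint h).
Proof.
move=> [H1 H2]; rewrite /cint /=.
rewrite (rint_ext (f := fun t => cRe (conjc (h t))) (g := fun t => cRe (h t)));
  last by move=> t /=; rewrite cRe_conj.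
rewrite (rint_ext (f := fun t => cIm (conjc (h t))) (g := fun t => (-1) * cIm (h t)));
  last by move=> t /=; rewrite cIm_conj mulN1r.
by rewrite rint_scal // mulN1r.
Qed.

Lemma cint0 : cint (fun _ => 0) = 0.
Proof. by rewrite /cint /= rint0. Qed.

Lemma good_add h1 h2 : good h1 -> good h2 -> good (fun t => h1 t + h2 t).
Proof.
move=> [H1 H1'] [H2 H2']; split=> t.
  by apply: (continuous_ext (fun t => cRe (h1 t) + cRe (h2 t))) => [x|]; [rewrite cRe_add | apply: Cont_plus].
by apply: (continuous_ext (fun t => cIm (h1 t) + cIm (h2 t))) => [x|]; [rewrite cIm_add | apply: Cont_plus].
Qed.

Lemma good_mul h1 h2 : good h1 -> good h2 -> good (fun t => h1 t * h2 t).
Proof.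
move=> [H1 H1'] [H2 H2']; split=> t.
  apply: (continuous_ext (fun t => cRe (h1 t) * cRe (h2 t) - cIm (h1 t) * cIm (h2 t))) => [x|].
    by rewrite cRe_mul.
  by apply: Cont_sub; apply: Cont_mult.
apply: (continuous_ext (fun t => cRe (h1 t) * cIm (h2 t) + cIm (h1 t) * cRe (h2 t))) => [x|].
  by rewrite cIm_mul.
by apply: Cont_plus; apply: Cont_mult.
Qed.

Lemma good_conj h : good h -> good (fun t => conjc (h t)).
Proof.
move=> [H1 H2]; split=> t.
  by apply: (continuous_ext (fun t => cRe (h t))) => [x|//]; rewrite cRe_conj.
by apply: (continuous_ext (fun t => - cIm (h t))) => [x|]; [rewrite cIm_conj | apply: Cont_opp].
Qed.

Lemma good_const c : good (fun _ => c).
Proof. by split; apply: Cont_const. Qed.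

Lemma good_eit : good eit.
Proof. by split; [apply: Cont_cos | apply: Cont_sin]. Qed.

Lemma good_horner (P : {poly R[i]}) : good (fun t => P.[eit t]).
Proof.
elim/poly_ind: P => [|P c IH].
  by split=> t; apply: (continuous_ext (fun _ : R => (0:R))) => [x|]; rewrite ?horner0 //; apply: continuous_const.
split=> t.
  apply: (continuous_ext (fun t => cRe (P.[eit t] * eit t + c))) => [x|].
    by rewrite hornerMXaddC.
  by case: (good_add (good_mul IH good_eit) (good_const c)).
apply: (continuous_ext (fun t => cIm (P.[eit t] * eit t + c))) => [x|].
  by rewrite hornerMXaddC.
by case: (good_add (good_mul IH good_eit) (good_const c)).
Qed.

Lemma good_sum n (F : 'I_n -> R -> R[i]) : (forall i, good (F i)) ->
  good (fun t => \sum_(i < n) F i t).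
Proof.
elim: n F => [|n IH] F HF.
  split=> t; apply: (continuous_ext (fun _ : R => (0:R))) => [x|]; rewrite ?big_ord0 //; apply: continuous_const.
split=> t.
  apply: (continuous_ext (fun t => cRe (\sum_(i < n) F (widen_ord (leqnSn n) i) t + F ord_max t))) => [x|].
    by rewrite big_ord_recr.
  by case: (good_add (IH (fun i => F (widen_ord (leqnSn n) i)) (fun i => HF _)) (HF ord_max)).
apply: (continuous_ext (fun t => cIm (\sum_(i < n) F (widen_ord (leqnSn n) i) t + F ord_max t))) => [x|].
  by rewrite big_ord_recr.
by case: (good_add (IH (fun i => F (widen_ord (leqnSn n) i)) (fun i => HF _)) (HF ord_max)).
Qed.

Lemma cint_sum n (F : 'I_n -> R -> R[i]) : (forall i, good (F i)) ->
  cint (fun t => \sum_(i < n) F i t) = \sum_(i < n) cint (F i).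
Proof.
elim: n F => [|n IH] F HF.
  by rewrite big_ord0 (cint_ext (h2 := fun _ => 0)) ?cint0 // => t; rewrite big_ord0.
rewrite big_ord_recr /= -(IH (fun i => F (widen_ord (leqnSn n) i))) //.
rewrite -cint_add; last exact: HF.
  by apply: cint_ext => t; rewrite big_ord_recr.
exact: (good_sum (fun i => HF (widen_ord (leqnSn n) i))).
Qed.

End Integrals.

Import GRing.Theory Num.Theory.
Local Open Scope ring_scope.

Section IP.
Variable phi : R -> R.
Hypothesis Hphi : Cont phi.

Definition ipc (P Q : {poly R[i]}) : R[i] :=
  cint phi (fun t => P.[eit t] * conjc Q.[eit t]).

Definition nrm2 P := cRe (ipc P P).

Lemma inner_reE P Q : inner_re phi P Q = cRe (ipc P Q).
Proof. by apply: rint_ext => t; rewrite cconjE. Qed.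

Lemma inner_imE P Q : inner_im phi P Q = cIm (ipc P Q).
Proof. by apply: rint_ext => t; rewrite cconjE. Qed.

Lemma good_pq P Q : good (fun t => P.[eit t] * conjc Q.[eit t]).
Proof. by apply: good_mul; [apply: good_horner | apply: good_conj; apply: good_horner]. Qed.

Lemma ipcDl P Q S : ipc (P + Q) S = ipc P S + ipc Q S.
Proof.
rewrite /ipc -cint_add //; try exact: good_pq.
by apply: cint_ext => t; rewrite hornerD mulrDl.
Qed.

Lemma ipcZl c P S : ipc (c *: P) S = c * ipc P S.
Proof.
rewrite /ipc -cint_cmul //; last exact: good_pq.
by apply: cint_ext => t; rewrite hornerZ mulrA.
Qed.

Lemma ipc_sym P Q : ipc Q P = conjc (ipc P Q).
Proof.
rewrite /ipc -cint_conj //; last exact: good_pq.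
by apply: cint_ext => t; rewrite rmorphM /= conjcK mulrC.
Qed.

Lemma ipcDr P Q S : ipc S (P + Q) = ipc S P + ipc S Q.
Proof. by rewrite (ipc_sym (P + Q) S) ipcDl (ipc_sym P S) (ipc_sym Q S) rmorphD. Qed.

Lemma ipcZr c P S : ipc S (c *: P) = conjc c * ipc S P.
Proof. by rewrite (ipc_sym (c *: P) S) ipcZl (ipc_sym P S) rmorphM. Qed.

Lemma ipc0l S : ipc 0 S = 0.
Proof. by rewrite -(scale0r (0 : {poly R[i]})) ipcZl mul0r. Qed.

Lemma ipc0r S : ipc S 0 = 0.
Proof. by rewrite ipc_sym ipc0l rmorph0. Qed.

Lemma ipcNl P S : ipc (- P) S = - ipc P S.
Proof. by rewrite -scaleN1r ipcZl mulN1r. Qed.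

Lemma ipcNr P S : ipc S (- P) = - ipc S P.
Proof. by rewrite -scaleN1r ipcZr rmorphN rmorph1 mulN1r. Qed.

Lemma ipcBl P Q S : ipc (P - Q) S = ipc P S - ipc Q S.
Proof. by rewrite ipcDl ipcNl. Qed.

Lemma ipcBr P Q S : ipc S (P - Q) = ipc S P - ipc S Q.
Proof. by rewrite ipcDr ipcNr. Qed.

Lemma ipc_shift j P Q : ipc ('X^j * P) ('X^j * Q) = ipc P Q.
Proof.
apply: cint_ext => t; rewrite !hornerM hornerXn !rmorphM /=.
have : eit t ^+ j * conjc (eit t ^+ j) = 1 by rewrite rmorphXn /= -exprMn eit_norm expr1n.
move=> H; rewrite -[RHS]mul1r -{1}H; ring.
Qed.

Lemma ipc_sum_l n (F : 'I_n -> {poly R[i]}) S :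
  ipc (\sum_(i < n) F i) S = \sum_(i < n) ipc (F i) S.
Proof.
elim: n F => [|n IH] F; first by rewrite !big_ord0 ipc0l.
by rewrite !big_ord_recr ipcDl IH.
Qed.

Lemma ipc_sum_r n (F : 'I_n -> {poly R[i]}) S :
  ipc S (\sum_(i < n) F i) = \sum_(i < n) ipc S (F i).
Proof.
elim: n F => [|n IH] F; first by rewrite !big_ord0 ipc0r.
by rewrite !big_ord_recr ipcDr IH.
Qed.

End IP.

Import GRing.Theory Num.Theory.

Local Open Scope ring_scope.

Definition wone : R -> R := fun _ => 1%R.
Lemma Cont_one : Cont wone. Proof. exact: Cont_const. Qed.

Lemma ipc1_mono (i j : nat) : ipc wone 'X^i 'X^j = (i == j)%:R.
Proof.
set z := Z.sub (Z.of_nat i) (Z.of_nat j).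
rewrite /ipc (@cint_ext wone _ (fun t => eit (Rmult (IZR z) t))); last first.
  move=> t; rewrite !hornerXn !eit_exp eit_conj eit_mul; congr eit.
  rewrite /z minus_IZR -!INR_IZR_INZ !INRE RplusE RminusE !RmultE RoppE; ring.
rewrite /cint /rint /wone /=.
case: (eqVneq i j) => [hij|hij].
  have -> : z = Z0 by rewrite /z hij; lia.
  by rewrite int_cos0 int_sin0 div2PI_self div2PI_0.
have hz : z <> Z0 by rewrite /z => H; move/eqP: hij; apply; lia.
by rewrite int_cos // int_sin // div2PI_0.
Qed.

Lemma poly_wide (P : {poly R[i]}) N : (size P <= N)%N -> P = \sum_(i < N) P`_i *: 'X^i.
Proof.
move=> H; rewrite -poly_def; apply/polyP => k; rewrite coef_poly; case: ltnP => // hk.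
by rewrite nth_default //; exact: leq_trans H hk.
Qed.

Lemma ipc1_coef (P Q : {poly R[i]}) N : (size P <= N)%N -> (size Q <= N)%N ->
  ipc wone P Q = \sum_(i < N) P`_i * conjc Q`_i.
Proof.
move=> hP hQ; rewrite {1}(poly_wide hP) {1}(poly_wide hQ) (ipc_sum_l Cont_one).
apply: eq_bigr => i _; rewrite (ipc_sum_r Cont_one) (bigD1 i) //= big1 ?addr0.
  by rewrite (ipcZl Cont_one) (ipcZr Cont_one) ipc1_mono eqxx mulr1.
move=> j hj; rewrite (ipcZl Cont_one) (ipcZr Cont_one) ipc1_mono.
have /negbTE -> : (i : nat) != j by rewrite eq_sym; exact: hj.
by rewrite mulr0 mulr0.
Qed.

Definition sqn (z : R[i]) := cRe z ^+ 2 + cIm z ^+ 2.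

Lemma sqn_ge0 z : 0 <= sqn z.
Proof. by rewrite /sqn addr_ge0 // sqr_ge0. Qed.

Lemma cRe_sqn z : cRe (z * conjc z) = sqn z.
Proof. by rewrite cRe_mul cRe_conj cIm_conj /sqn !expr2 mulrN opprK. Qed.

Lemma cRe_sum n (F : 'I_n -> R[i]) : cRe (\sum_(i < n) F i) = \sum_(i < n) cRe (F i).
Proof.
elim: n F => [|n IH] F; first by rewrite !big_ord0.
by rewrite !big_ord_recr cRe_add IH.
Qed.

Lemma parseval (P : {poly R[i]}) N : (size P <= N)%N -> nrm2 wone P = \sum_(i < N) sqn P`_i.
Proof.
move=> hP; rewrite /nrm2 (ipc1_coef hP hP) cRe_sum.
by apply: eq_bigr => i _; rewrite cRe_sqn.
Qed.

Lemma rint_le phi psi f g : Cont phi -> Cont psi -> Cont f -> Cont g ->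
  (forall t, Rlt (Ropp PI) t -> Rlt t PI -> f t * phi t <= g t * psi t) -> rint phi f <= rint psi g.
Proof.
move=> Hphi Hpsi Hf Hg H; rewrite /rint.
apply/RleP; apply: div2PI_le; apply: RInt_le; first exact: mPI_le_PI.
- exact: ex_rint.
- exact: ex_rint.
by move=> x [h1 h2]; apply/RleP; apply: H.
Qed.

Lemma sqn_horner_Cont (P : {poly R[i]}) : Cont (fun t => cRe (P.[eit t] * conjc P.[eit t])).
Proof. by case: (good_mul (good_horner P) (good_conj (good_horner P))). Qed.

Lemma nrm2_bounds phi (a b : R) (P : {poly R[i]}) : Cont phi ->
  (forall t, Rle (Ropp PI) t -> Rle t PI -> a <= phi t <= b) ->
  a * nrm2 wone P <= nrm2 phi P /\ nrm2 phi P <= b * nrm2 wone P.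
Proof.
move=> Hphi Hab.
have Hf := @sqn_horner_Cont P.
have Hpos : forall t, 0 <= cRe (P.[eit t] * conjc P.[eit t]) by move=> t; rewrite cRe_sqn sqn_ge0.
rewrite /nrm2 /ipc /cint /=.
have Ha : Cont (fun t => a * cRe (P.[eit t] * conjc P.[eit t])) by apply: Cont_mult => //; apply: Cont_const.
have Hb : Cont (fun t => b * cRe (P.[eit t] * conjc P.[eit t])) by apply: Cont_mult => //; apply: Cont_const.
rewrite -!(rint_scal Cont_one) //; split.
  apply: (rint_le Cont_one Hphi Ha Hf) => t ht1 ht2.
  have /andP[h1 h2] := Hab t (Rlt_le _ _ ht1) (Rlt_le _ _ ht2).
  by rewrite /wone mulr1 mulrC ler_wpM2l.
apply: (rint_le Hphi Cont_one Hf Hb) => t ht1 ht2.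
have /andP[h1 h2] := Hab t (Rlt_le _ _ ht1) (Rlt_le _ _ ht2).
by rewrite /wone mulr1 [X in _ <= X]mulrC ler_wpM2l.
Qed.

Import Order.TTheory GRing.Theory Num.Theory.
Local Open Scope complex_scope.
Local Open Scope ring_scope.

Lemma sq_le (x y : R) : 0 <= y -> x ^+ 2 <= y ^+ 2 -> x <= y.
Proof. move=> hy h. case: (lerP x y) => // hxy. nra. Qed.

Lemma cRe_realC (c : R) (z : R[i]) : cRe (c%:C * z) = c * cRe z.
Proof. rewrite cRe_mul /=; ring. Qed.

Section CS.
Variable phi : R -> R.
Hypothesis Hphi : Cont phi.
Hypothesis Hpos : forall P, 0 <= nrm2 phi P.

Lemma nrm2D P Q : nrm2 phi (P + Q) = nrm2 phi P + nrm2 phi Q + 2 * cRe (ipc phi P Q).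
Proof.
rewrite /nrm2 (ipcDl Hphi) !(ipcDr Hphi) (ipc_sym Hphi P Q) !cRe_add cRe_conj; ring.
Qed.

Lemma nrm2N P : nrm2 phi (- P) = nrm2 phi P.
Proof. by rewrite /nrm2 (ipcNl Hphi) (ipcNr Hphi) opprK. Qed.

Lemma nrm2B P Q : nrm2 phi (P - Q) = nrm2 phi P + nrm2 phi Q - 2 * cRe (ipc phi P Q).
Proof. rewrite nrm2D nrm2N (ipcNr Hphi) cRe_opp; ring. Qed.

Lemma nrm2Z (c : R) P : nrm2 phi (c%:C *: P) = c ^+ 2 * nrm2 phi P.
Proof.
rewrite /nrm2 (ipcZl Hphi) (ipcZr Hphi) conjc_real cRe_realC cRe_realC; ring.
Qed.

Lemma ipcZr_real (c : R) P Q : cRe (ipc phi P (c%:C *: Q)) = c * cRe (ipc phi P Q).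
Proof. by rewrite (ipcZr Hphi) conjc_real cRe_realC. Qed.

Lemma CS P Q : cRe (ipc phi P Q) ^+ 2 <= nrm2 phi P * nrm2 phi Q.
Proof.
set A := nrm2 phi P; set C := nrm2 phi Q; set B := cRe (ipc phi P Q).
have H : forall t : R, 0 <= A + 2 * t * B + t ^+ 2 * C.
  move=> t; have := Hpos (P + t%:C *: Q).
  by rewrite nrm2D nrm2Z ipcZr_real -/A -/B -/C => h; lra.
have hC : 0 <= C by apply: Hpos.
have hA : 0 <= A by apply: Hpos.
case: (ltrgt0P C) => hc.
- have := H (- B / C).
  have -> : A + 2 * (- B / C) * B + (- B / C) ^+ 2 * C = (A * C - B ^+ 2) / C.
    by field; exact: lt0r_neq0.
  move=> h; have : 0 <= (A * C - B ^+ 2) / C * C by apply: mulr_ge0 => //; exact: ltW.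
  by rewrite divfK ?(lt0r_neq0 hc) // subr_ge0.
- by move: hC; rewrite leNgt hc.
case: (eqVneq B 0) => hB; first by rewrite hB hc expr0n mulr0.
have := H (- (A + 1) / (2 * B)).
have -> : A + 2 * (- (A + 1) / (2 * B)) * B + (- (A + 1) / (2 * B)) ^+ 2 * C = -1.
  by rewrite hc mulr0 addr0; field; rewrite hB.
by rewrite ler0N1.
Qed.

Lemma diff_sq F G (Bv : R) : 0 <= Bv -> Bv ^+ 2 = nrm2 phi G ->
  (Num.sqrt (nrm2 phi F) - Bv) ^+ 2 <= nrm2 phi (F - G).
Proof.
move=> hB hG.
set Av := Num.sqrt (nrm2 phi F).
have hA : Av ^+ 2 = nrm2 phi F by rewrite sqr_sqrtr //; apply: Hpos.
have hA0 : 0 <= Av by apply: sqrtr_ge0.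
have hcs : cRe (ipc phi F G) <= Av * Bv.
  apply: sq_le; first exact: mulr_ge0.
  by rewrite [X in _ <= X]exprMn hA hG; apply: CS.
rewrite nrm2B -hA -hG.
have -> : (Av - Bv) ^+ 2 = Av ^+ 2 + Bv ^+ 2 - 2 * (Av * Bv) by ring.
lra.
Qed.

End CS.

Lemma sqn_sub_le (x y : R[i]) : sqn (x - y) <= 2 * sqn x + 2 * sqn y.
Proof.
rewrite /sqn cRe_add cIm_add cRe_opp cIm_opp.
set a := cRe x; set b := cIm x; set c := cRe y; set d := cIm y.
have e : 2 * (a ^+ 2 + b ^+ 2) + 2 * (c ^+ 2 + d ^+ 2) - ((a - c) ^+ 2 + (b - d) ^+ 2)
  = (a + c) ^+ 2 + (b + d) ^+ 2 by ring.
by rewrite -subr_ge0 e addr_ge0 // sqr_ge0.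
Qed.

Lemma sqn_mulr (z : R[i]) (c : R) : sqn (z * c%:C) = c ^+ 2 * sqn z.
Proof. rewrite /sqn cRe_mul cIm_mul /=; ring. Qed.

Lemma sqn1 : sqn 1 = 1.
Proof. rewrite /sqn /=; ring. Qed.

Lemma ffact_le_exp (p n i : nat) : (i <= n)%N -> (i ^_ p <= n ^ p)%N.
Proof.
move=> hin; elim: p => [|p IH] //.
rewrite ffactnSr expnSr leq_mul //.
exact: leq_trans (leq_subr _ _) hin.
Qed.

Lemma ffact_mono (p n i : nat) : (i <= n)%N -> (i ^_ p <= n ^_ p)%N.
Proof.
move=> hin; elim: p => [|p IH] //.
by rewrite !ffactnSr leq_mul // leq_sub2r.
Qed.

Lemma ff1 (p n i : nat) : (i <= n)%N ->
  n%:R * ((n ^_ p)%:R - (i ^_ p)%:R) <= p%:R * (n%:R ^+ p) * (n - i)%:R :> R.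
Proof.
move=> hin; elim: p => [|p IH]; first by rewrite !ffactn0 subrr mulr0 mul0r mul0r.
rewrite !ffactnSr !natrM.
set x := (n ^_ p)%:R : R; set y := (i ^_ p)%:R : R; set X := n%:R ^+ p : R.
set u := (n - p)%:R : R; set v := (i - p)%:R : R; set d := (n - i)%:R : R.
set N := n%:R : R.
have hy0 : 0 <= y by apply: ler0n.
have hyX : y <= X by rewrite /y /X -natrX ler_nat; apply: ffact_le_exp.
have hv0 : 0 <= v by apply: ler0n.
have hu0 : 0 <= u by apply: ler0n.
have huN : u <= N by rewrite /u /N ler_nat leq_subr.
have huv : u <= v + d by rewrite /u /v /d -natrD ler_nat; lia.
have hd0 : 0 <= d by apply: ler0n.
have hX0 : 0 <= X by rewrite /X exprn_ge0 // ler0n.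
have hN0 : 0 <= N by apply: ler0n.
have hp0 : 0 <= p%:R :> R by apply: ler0n.
rewrite exprSr -/X.
have e : N * (x * u - y * v) = (N * (x - y)) * u + N * y * (u - v) by ring.
rewrite e.
have h1 : N * (x - y) * u <= p%:R * X * d * N.
  apply: le_trans (_ : p%:R * X * d * u <= _).
    by apply: ler_wpM2r.
  by apply: ler_wpM2l => //; apply: mulr_ge0 => //; apply: mulr_ge0.
have h2 : N * y * (u - v) <= N * X * d.
  rewrite -mulrA -[N * X * d]mulrA; apply: ler_wpM2l => //.
  apply: le_trans (_ : y * d <= _); first by apply: ler_wpM2l => //; lra.
  by apply: ler_wpM2r.
rewrite -natr1 mulrDl mul1r; lra.
Qed.

Lemma ff2 (p n : nat) :
  n%:R * (n%:R ^+ p - (n ^_ p)%:R) <= (p ^ 2)%:R * (n%:R ^+ p) :> R.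
Proof.
elim: p => [|p IH]; first by rewrite ffactn0 expr0 subrr mulr0 mul0r.
rewrite ffactnSr natrM exprSr.
set x := (n ^_ p)%:R : R; set X := n%:R ^+ p : R; set u := (n - p)%:R : R.
set N := n%:R : R.
have hx0 : 0 <= x by apply: ler0n.
have hxX : x <= X by rewrite /x /X -natrX ler_nat; apply: ffact_le_exp.
have hu0 : 0 <= u by apply: ler0n.
have hNu : N <= u + p%:R by rewrite /u /N -natrD ler_nat; lia.
have hX0 : 0 <= X by rewrite /X exprn_ge0 // ler0n.
have hN0 : 0 <= N by apply: ler0n.
have e : N * (X * N - x * u) = N * (X - x) * N + N * x * (N - u) by ring.
rewrite e.
have h1 : N * (X - x) * N <= (p ^ 2)%:R * X * N by apply: ler_wpM2r.
have h2 : N * x * (N - u) <= N * X * p%:R.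
  rewrite -!mulrA; apply: ler_wpM2l => //.
  apply: le_trans (_ : x * p%:R <= _); first by apply: ler_wpM2l => //; lra.
  by apply: ler_wpM2r => //; apply: ler0n.
have hp : ((p.+1) ^ 2)%:R = (p ^ 2)%:R + p%:R + p%:R + 1 :> R.
  by rewrite !natrX -natr1; ring.
rewrite hp.
have hXN : 0 <= X * N by apply: mulr_ge0.
have h3 : 0 <= p%:R * (X * N) by apply: mulr_ge0 => //; apply: ler0n.
have -> : ((p ^ 2)%:R + p%:R + p%:R + 1) * (X * N)
  = (p ^ 2)%:R * X * N + N * X * p%:R + (p%:R * (X * N) + X * N) by ring.
lra.
Qed.

Import Order.TTheory GRing.Theory Num.Theory.
Local Open Scope complex_scope.
Local Open Scope ring_scope.

Lemma ceta (z : R[i]) : z = Complex (cRe z) (cIm z). Proof. by case: z. Qed.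

Lemma nrm2_one_ge0 P : 0 <= nrm2 wone P.
Proof. rewrite (@parseval P (size P)) //; apply: sumr_ge0 => i _; exact: sqn_ge0. Qed.

Section Main.
Variables (w : R -> R) (a b : R) (pi_ : nat -> {poly R[i]}).
Hypothesis Hw : Cont w.
Hypothesis Ha : 0 < a.
Hypothesis Hab : forall t, Rle (Ropp PI) t -> Rle t PI -> a <= w t <= b.
Hypothesis Hop : forall n, monic_OP w n (pi_ n).

Lemma lowU P : a * nrm2 wone P <= nrm2 w P.
Proof. by case: (nrm2_bounds P Hw Hab). Qed.
Lemma upU P : nrm2 w P <= b * nrm2 wone P.
Proof. by case: (nrm2_bounds P Hw Hab). Qed.
Lemma Hpos P : 0 <= nrm2 w P.
Proof. apply: le_trans (lowU P); apply: mulr_ge0; [exact: ltW | exact: nrm2_one_ge0]. Qed.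

Lemma orth n (Q : {poly R[i]}) : (size Q <= n)%N -> ipc w (pi_ n) Q = 0.
Proof.
move=> hQ; have [_ [_ H]] := Hop n; have [h1 h2] := H Q hQ.
by rewrite [ipc _ _ _]ceta -inner_reE -inner_imE h1 h2.
Qed.

Lemma size_pi n : size (pi_ n) = n.+1.
Proof. by have [_ [h _]] := Hop n. Qed.

Lemma coef_pi_n n : (pi_ n)`_n = 1.
Proof.
have [hm _] := Hop n; move/monicP: hm; rewrite lead_coefE size_pi /=; done.
Qed.

Lemma coef_pi_big n j : (n < j)%N -> (pi_ n)`_j = 0.
Proof. by move=> h; rewrite nth_default // size_pi. Qed.

Definition mu n := nrm2 w (pi_ n).

Lemma mu_ge_a n : a <= mu n.
Proof.
apply: le_trans (lowU _); rewrite -[X in X <= _]mulr1; apply: ler_wpM2l; first exact: ltW.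
rewrite (@parseval _ n.+1) ?size_pi // big_ord_recr /= coef_pi_n sqn1.
by rewrite lerDr; apply: sumr_ge0 => i _; exact: sqn_ge0.
Qed.

Definition Dp m n := 'X^(n - m) * pi_ m - pi_ n.

Lemma size_Dp m n : (m <= n)%N -> (size (Dp m n) <= n)%N.
Proof.
move=> hmn; apply/leq_sizeP => j hj; rewrite /Dp coefB coefXnM.
have -> : (j < n - m)%N = false by apply/negbTE; rewrite -leqNgt; lia.
case: (ltngtP n j) => hnj; last by rewrite -hnj subKn // !coef_pi_n subrr.
  by rewrite !coef_pi_big ?subrr //; lia.
by lia.
Qed.

Lemma mu_step m n : (m <= n)%N -> mu m = mu n + nrm2 w (Dp m n).
Proof.
move=> hmn.
have e : 'X^(n - m) * pi_ m = pi_ n + Dp m n by rewrite /Dp addrC subrK.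
rewrite /mu -[nrm2 w (pi_ m)]/(cRe (ipc w (pi_ m) (pi_ m))) -(ipc_shift w (n - m)) -/(nrm2 w _) e.
rewrite (nrm2D Hw) orth ?size_Dp //.
by rewrite mulr0 addr0.
Qed.

Lemma mu_decr m n : (m <= n)%N -> mu n <= mu m.
Proof. by move=> h; rewrite (mu_step h) lerDl Hpos. Qed.


Lemma mu_cauchy (d : R) : 0 < d -> exists N, forall n, (N <= n)%N -> mu N - mu n <= d.
Proof.
move=> hd.
have H1 : forall n, Rle (mu n.+1) (mu n) by move=> n; apply/RleP; apply: mu_decr.
have H2 : forall n, Rle 0 (mu n) by move=> n; apply/RleP; apply: Hpos.
have H3 : Rlt 0 d by apply/RltP.
have [N HN] := @cauchy_decr mu H1 H2 d H3.
by exists N => n hn; apply/RleP; apply: HN.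
Qed.

Definition s n := \sum_(i < n.+1) ((n - i)%:R) ^+ 2 * sqn (pi_ n)`_i.

Lemma size_shift N n : (N <= n)%N -> (size ('X^(n - N) * pi_ N)%R <= n.+1)%N.
Proof.
move=> h; apply/leq_sizeP => j hj; rewrite coefXnM.
case: ifP => // _; rewrite coef_pi_big //; lia.
Qed.

Lemma s_bound N n : (N <= n)%N -> a * s n <= 2 * (N%:R ^+ 2 * mu N) + 2 * (n%:R ^+ 2 * (mu N - mu n)).
Proof.
move=> hNn.
set C := 'X^(n - N) * pi_ N.
have hpi : pi_ n = C - Dp N n by rewrite /Dp opprB addrC subrK.
have hC : (size C <= n.+1)%N by apply: size_shift.
have hD : (size (Dp N n) <= n.+1)%N by apply: leq_trans (size_Dp hNn) _.
have ht : forall i : 'I_n.+1, ((n - i)%:R) ^+ 2 * sqn (pi_ n)`_i <=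
    2 * N%:R ^+ 2 * sqn C`_i + 2 * n%:R ^+ 2 * sqn (Dp N n)`_i.
  move=> i; rewrite {1}hpi coefB.
  have hsq := sqn_sub_le C`_i (Dp N n)`_i.
  have hn0 : 0 <= ((n - i)%:R : R) ^+ 2 by apply: sqr_ge0.
  have h1 : ((n - i)%:R : R) ^+ 2 * sqn C`_i <= N%:R ^+ 2 * sqn C`_i.
    rewrite /C coefXnM; case: ifP => hi; first by rewrite /sqn /= !expr2 !mulr0 !addr0 !mulr0 lexx.
    apply: ler_wpM2r; first exact: sqn_ge0.
    rewrite -!natrX ler_nat leq_exp2r //.
    move: hi => /negbT; rewrite -leqNgt => hi; lia.
  have h2 : ((n - i)%:R : R) ^+ 2 * sqn (Dp N n)`_i <= n%:R ^+ 2 * sqn (Dp N n)`_i.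
    apply: ler_wpM2r; first exact: sqn_ge0.
    by rewrite -!natrX ler_nat leq_exp2r // leq_subr.
  have h3 := ler_wpM2l hn0 hsq.
  have hC0 := sqn_ge0 C`_i; have hD0 := sqn_ge0 (Dp N n)`_i.
  apply: le_trans h3 _.
  have -> : ((n - i)%:R : R) ^+ 2 * (2 * sqn C`_i + 2 * sqn (Dp N n)`_i)
    = 2 * (((n - i)%:R : R) ^+ 2 * sqn C`_i) + 2 * (((n - i)%:R : R) ^+ 2 * sqn (Dp N n)`_i) by ring.
  have -> : 2 * N%:R ^+ 2 * sqn C`_i + 2 * n%:R ^+ 2 * sqn (Dp N n)`_i
    = 2 * (N%:R ^+ 2 * sqn C`_i) + 2 * (n%:R ^+ 2 * sqn (Dp N n)`_i) :> R by ring.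
  lra.
have hs : s n <= 2 * N%:R ^+ 2 * nrm2 wone C + 2 * n%:R ^+ 2 * nrm2 wone (Dp N n).
  rewrite (parseval hC) (parseval hD) !mulr_sumr -big_split /=.
  by apply: ler_sum => k _; apply: ht.
have hl1 := lowU C; have hl2 := lowU (Dp N n).
have hmuN : nrm2 w C = mu N.
  by rewrite /C /nrm2 ipc_shift.
have hmuD : nrm2 w (Dp N n) = mu N - mu n by rewrite (mu_step hNn); ring.
rewrite hmuN in hl1; rewrite hmuD in hl2.
have hN2 : 0 <= 2 * N%:R ^+ 2 :> R by rewrite mulr_ge0 // sqr_ge0.
have hn2 : 0 <= 2 * n%:R ^+ 2 :> R by rewrite mulr_ge0 // sqr_ge0.
have h4 := ler_wpM2l (ltW Ha) hs.
set X := nrm2 wone C in h4 hl1; set Y := nrm2 wone (Dp N n) in h4 hl2.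
have e1 : a * (2 * N%:R ^+ 2 * X + 2 * n%:R ^+ 2 * Y) = 2 * N%:R ^+ 2 * (a * X) + 2 * n%:R ^+ 2 * (a * Y) by ring.
rewrite e1 in h4.
have h5 := ler_wpM2l hN2 hl1; have h6 := ler_wpM2l hn2 hl2.
have -> : 2 * (N%:R ^+ 2 * mu N) + 2 * (n%:R ^+ 2 * (mu N - mu n))
  = 2 * N%:R ^+ 2 * mu N + 2 * n%:R ^+ 2 * (mu N - mu n) by ring.
lra.
Qed.



Lemma s_small (e : R) : 0 < e -> exists M, (0 < M)%N /\ forall n, (M <= n)%N -> a * s n <= e * n%:R ^+ 2.
Proof.
move=> he.
have hd : 0 < e / 4 by rewrite divr_gt0.
have [N HN] := mu_cauchy hd.
set K := 2 * (N%:R ^+ 2 * mu N).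
have hK0 : 0 <= K by rewrite mulr_ge0 // mulr_ge0 ?sqr_ge0 // Hpos.
pose r := 2 * K / e.
have [M0 hM0] := nat_unbounded r.
have hM0' : r < M0%:R by rewrite -INRE; apply/RltP.
have hM1 : 2 * K < M0%:R * e.
  by move: hM0'; rewrite /r -(ltr_pM2r he) divfK // gt_eqF.
exists (maxn (maxn N M0) 1); split; first by rewrite leq_max orbT.
move=> n hn.
have hNn : (N <= n)%N by apply: leq_trans hn; rewrite leq_max leq_max leqnn.
have hMn : (M0 <= n)%N by apply: leq_trans hn; rewrite leq_max leq_max leqnn orbT.
have h1n : (1 <= n)%N by apply: leq_trans hn; rewrite leq_max leqnn orbT.
have hb := s_bound hNn; rewrite -/K in hb.
have hc := HN n hNn.
set nn := n%:R : R.
have hnn : M0%:R <= nn by rewrite ler_nat.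
have hn1 : 1 <= nn by rewrite ler1n.
have hsq : nn <= nn ^+ 2 by rewrite expr2 ler_peMr // (le_trans ler01 hn1).
have hn2 : 0 <= nn ^+ 2 by apply: sqr_ge0.
have h2 : 2 * (nn ^+ 2 * (mu N - mu n)) <= 2 * (nn ^+ 2 * (e / 4)).
  by rewrite ler_pM2l // ler_wpM2l.
have h3 : 2 * K < nn * e.
  apply: lt_le_trans hM1 _; rewrite ler_pM2r //.
have h4 : nn * e <= nn ^+ 2 * e by rewrite ler_pM2r.
have -> : e * nn ^+ 2 = 2 * (nn ^+ 2 * (e / 4)) + (nn ^+ 2 * e) / 2 by field.
lra.
Qed.

Lemma wnormE P : wnorm w P = Num.sqrt (nrm2 w P).
Proof. by rewrite /wnorm RsqrtE inner_reE. Qed.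

Lemma coefE p n i : (('X^p * derivn p (pi_ n)) - ((n ^_ p)%:R : R)%:C *: pi_ n)`_i
  = (pi_ n)`_i * (((i ^_ p)%:R - (n ^_ p)%:R : R)%:C).
Proof.
rewrite coefB coefXnM coefZ rmorphB /= mulrBr [_%:C * _]mulrC.
case: ltnP => hi.
  by rewrite (ffact_small hi) mulr0n rmorph0 mulr0.
rewrite coef_derivn subnKC // -[_ *+ _]mulr_natr.
by rewrite -[((i ^_ p)%:R : R[i])](rmorph_nat (real_complex R)).
Qed.

Lemma hE p n : n%:R ^+ 2 * nrm2 wone (('X^p * derivn p (pi_ n)) - ((n ^_ p)%:R : R)%:C *: pi_ n)
  <= p%:R ^+ 2 * (n%:R ^+ p) ^+ 2 * s n.
Proof.
set E := _ - _.
have hsE : (size E <= n.+1)%N.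
  apply/leq_sizeP => j hj; rewrite /E coefE coef_pi_big ?mul0r //.
rewrite (parseval hsE) /s mulr_sumr mulr_sumr.
apply: ler_sum => i _.
rewrite /E coefE sqn_mulr.
have hin : (i <= n)%N by rewrite -ltnS.
have hf1 := ff1 p hin.
have hmono : ((i ^_ p)%:R : R) <= (n ^_ p)%:R by rewrite ler_nat ffact_mono.
have hx0 : 0 <= n%:R * ((n ^_ p)%:R - (i ^_ p)%:R) :> R by rewrite mulr_ge0 // subr_ge0.
have hsq : (n%:R * ((n ^_ p)%:R - (i ^_ p)%:R)) ^+ 2 <= (p%:R * n%:R ^+ p * (n - i)%:R) ^+ 2 :> R.
  by rewrite !expr2 ler_pM.
have e1 : n%:R ^+ 2 * (((i ^_ p)%:R - (n ^_ p)%:R) ^+ 2 * sqn (pi_ n)`_i)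
  = (n%:R * ((n ^_ p)%:R - (i ^_ p)%:R)) ^+ 2 * sqn (pi_ n)`_i :> R by ring.
have e2 : p%:R ^+ 2 * (n%:R ^+ p) ^+ 2 * ((n - i)%:R ^+ 2 * sqn (pi_ n)`_i)
  = (p%:R * n%:R ^+ p * (n - i)%:R) ^+ 2 * sqn (pi_ n)`_i :> R by ring.
rewrite e1 e2; apply: ler_wpM2r => //; exact: sqn_ge0.
Qed.


Definition rr p n := Rmult (Rinv (pow (INR n) p)) (Rdiv (wnorm w (derivn p (pi_ n))) (wnorm w (pi_ n))).
Definition tt p n := (n ^_ p)%:R / n%:R ^+ p : R.

Lemma est p n : (0 < n)%N ->
  (rr p n - tt p n) ^+ 2 * (a * n%:R ^+ 2) <= b * p%:R ^+ 2 * s n.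
Proof.
move=> hn.
rewrite /rr /tt RmultE RinvE RpowE INRE RdivE !wnormE.
set X := n%:R ^+ p : R.
have hX : 0 < X by rewrite exprn_gt0 // ltr0n.
set mu_n := nrm2 w (pi_ n).
have hmu : a <= mu_n by apply: mu_ge_a.
have hmu0 : 0 < mu_n := lt_le_trans Ha hmu.
set S := Num.sqrt mu_n.
have hS : 0 < S by rewrite sqrtr_gt0.
have hS2 : S ^+ 2 = mu_n by rewrite sqr_sqrtr // ltW.
set F := 'X^p * derivn p (pi_ n).
have hF : nrm2 w (derivn p (pi_ n)) = nrm2 w F by rewrite /F /nrm2 ipc_shift.
rewrite hF.
set A := Num.sqrt (nrm2 w F).
set ff := (n ^_ p)%:R : R.
have hff : 0 <= ff by apply: ler0n.
set G := ff%:C *: pi_ n.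
have hBv : (ff * S) ^+ 2 = nrm2 w G by rewrite /G (nrm2Z Hw) exprMn hS2.
have hdiff : (A - ff * S) ^+ 2 <= nrm2 w (F - G).
  by apply: (diff_sq Hw Hpos) => //; apply: mulr_ge0 => //; apply: ltW.
have hEup := upU (F - G).
have hEE := hE p n; rewrite -/F -/ff -/G -/X in hEE.
set q := (X^-1 * (A / S) - ff / X) ^+ 2.
have hq0 : 0 <= q by apply: sqr_ge0.
have hq : q * (X ^+ 2 * mu_n) = (A - ff * S) ^+ 2.
  rewrite /q -hS2; field; rewrite ?gt_eqF //.
set nE := nrm2 wone (F - G).
have hn2 : 0 <= (n%:R : R) ^+ 2 by apply: sqr_ge0.
have hb0 : 0 <= b.
  have /andP[h1 h2] := @Hab R0 mPI_le_0 zero_le_PI.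
  exact: le_trans (ltW (lt_le_trans Ha h1)) h2.
have h1 : q * (X ^+ 2 * mu_n) <= b * nE by rewrite hq; apply: le_trans hdiff hEup.
have h2 : q * (X ^+ 2 * mu_n) * n%:R ^+ 2 <= b * (n%:R ^+ 2 * nE).
  have -> : q * (X ^+ 2 * mu_n) * n%:R ^+ 2 = n%:R ^+ 2 * (q * (X ^+ 2 * mu_n)) by ring.
  have -> : b * (n%:R ^+ 2 * nE) = n%:R ^+ 2 * (b * nE) by ring.
  by apply: ler_wpM2l.
have h3 : b * (n%:R ^+ 2 * nE) <= b * (p%:R ^+ 2 * X ^+ 2 * s n) by apply: ler_wpM2l.
have h4 : (q * mu_n * n%:R ^+ 2) * X ^+ 2 <= (b * p%:R ^+ 2 * s n) * X ^+ 2.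
  have -> : q * mu_n * n%:R ^+ 2 * X ^+ 2 = q * (X ^+ 2 * mu_n) * n%:R ^+ 2 by ring.
  have -> : b * p%:R ^+ 2 * s n * X ^+ 2 = b * (p%:R ^+ 2 * X ^+ 2 * s n) by ring.
  exact: le_trans h2 h3.
have hX2 : 0 < X ^+ 2 by rewrite exprn_gt0.
rewrite ler_pM2r // in h4.
apply: le_trans h4.
have -> : q * (a * n%:R ^+ 2) = a * (q * n%:R ^+ 2) by ring.
have -> : q * mu_n * n%:R ^+ 2 = mu_n * (q * n%:R ^+ 2) by ring.
by apply: ler_wpM2r => //; apply: mulr_ge0.
Qed.


Lemma tt_bounds p n : (0 < n)%N -> tt p n <= 1 /\ n%:R * (1 - tt p n) <= (p ^ 2)%:R.
Proof.
move=> hn; rewrite /tt.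
set X := n%:R ^+ p : R; set ff := (n ^_ p)%:R : R.
have hX : 0 < X by rewrite exprn_gt0 // ltr0n.
have hfX : ff <= X by rewrite /ff /X -natrX ler_nat ffact_le_exp.
have h2 := ff2 p n; rewrite -/X -/ff in h2.
split; first by rewrite ler_pdivrMr // mul1r.
have -> : n%:R * (1 - ff / X) = (n%:R * (X - ff)) / X by field; rewrite gt_eqF.
by rewrite ler_pdivrMr.
Qed.

Lemma R1_one : R1 = 1 :> R. Proof. by []. Qed.

Lemma sq_lt (x y : R) : 0 <= y -> x ^+ 2 < y ^+ 2 -> x < y.
Proof. move=> hy h. case: (ltrP x y) => // hxy. nra. Qed.

Lemma main_gen p : is_lim_seq (rr p) (Rbar.Finite R1).
Proof.
apply/is_lim_seq_spec => eps.
have he : 0 < (eps : R) by apply/RltP; apply: cond_pos.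
set e := eps : R in he *.
have hb0 : a <= b.
  have /andP[h1 h2] := @Hab R0 mPI_le_0 zero_le_PI.
  exact: le_trans h1 h2.
set B := b * p%:R ^+ 2.
have hB : 0 <= B by rewrite mulr_ge0 ?sqr_ge0 // (le_trans (ltW Ha) hb0).
set e' := a ^+ 2 * (e / 2) ^+ 2 / (B + 1).
have hB1 : 0 < B + 1 by apply: lt_le_trans (ltr01) _; rewrite lerDr.
have he' : 0 < e' by rewrite /e' divr_gt0 // mulr_gt0 // exprn_gt0 // divr_gt0.
have [M [hM0 hM]] := s_small he'.
pose r2 := 2 * (p ^ 2)%:R / e.
have [M2 hM2] := nat_unbounded r2.
have hM2' : r2 < M2%:R by rewrite -INRE; apply/RltP.
exists (maxn M M2) => n /ssrnat.leP hn.
have hMn : (M <= n)%N by apply: leq_trans hn; rewrite leq_max leqnn.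
have hM2n : (M2 <= n)%N by apply: leq_trans hn; rewrite leq_max leqnn orbT.
have hn0 : (0 < n)%N by apply: leq_trans hMn.
have hest := est p hn0; have hs := hM n hMn.
have [ht1 ht2] := tt_bounds p hn0.
set q := (rr p n - tt p n) ^+ 2 in hest.
set nn := n%:R : R.
have hnn : 0 < nn by rewrite ltr0n.
have hn2 : 0 < nn ^+ 2 by rewrite exprn_gt0.
have hq0 : 0 <= q by apply: sqr_ge0.
have h1 : (q * a ^+ 2) * nn ^+ 2 <= (B * e') * nn ^+ 2.
  have -> : q * a ^+ 2 * nn ^+ 2 = a * (q * (a * nn ^+ 2)) by ring.
  have -> : B * e' * nn ^+ 2 = B * (e' * nn ^+ 2) by ring.
  apply: le_trans (_ : a * (B * s n) <= _).
    by rewrite ler_pM2l // -mulrA.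
  by rewrite mulrCA ler_wpM2l.
rewrite ler_pM2r // in h1.
have h2 : B * e' < a ^+ 2 * (e / 2) ^+ 2.
  have hc : 0 < a ^+ 2 * (e / 2) ^+ 2 by rewrite mulr_gt0 // exprn_gt0 // divr_gt0.
  have hc' : 0 < a ^+ 2 * (e / 2) ^+ 2 / (B + 1) by rewrite divr_gt0.
  have -> : B * e' = a ^+ 2 * (e / 2) ^+ 2 - a ^+ 2 * (e / 2) ^+ 2 / (B + 1).
    by rewrite /e'; field; rewrite gt_eqF.
  lra.
have h3 : q < (e / 2) ^+ 2.
  have ha2 : 0 < a ^+ 2 by rewrite exprn_gt0.
  rewrite -(ltr_pM2r ha2) [X in _ < X]mulrC; exact: le_lt_trans h1 h2.
have he2 : 0 <= e / 2 by rewrite ltW // divr_gt0.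
have h4 : rr p n - tt p n < e / 2 by apply: sq_lt.
have h5 : tt p n - rr p n < e / 2 by apply: sq_lt => //; rewrite -sqrrN opprB.
have h6 : 1 - tt p n < e / 2.
  have hnM : M2%:R <= nn by rewrite ler_nat.
  have h7 : r2 < nn := lt_le_trans hM2' hnM.
  have h8 : (p ^ 2)%:R < nn * (e / 2).
    by move: h7; rewrite /r2 -(ltr_pM2r he) divfK ?gt_eqF // => h; lra.
  have h9 : nn * (1 - tt p n) < nn * (e / 2) := le_lt_trans ht2 h8.
  by rewrite ltr_pM2l in h9.
apply: Rabs_def1; apply/RltP; rewrite ?RminusE ?RoppE R1_one; lra.
Qed.

End Main.

End H1.
Import H1.

Theorem corollary3p3 (p k : nat) (V : R -> R) (pi_ : nat -> {poly R[i]}) :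
  (2 * p + 1 <= k)%N ->
  C_lip_periodic k V ->
  (forall n, monic_OP (fun t => exp (Ropp (V t))) n (pi_ n)) ->
  is_lim_seq
    (fun n : nat => Rmult (Rinv (pow (INR n) p))
       (Rdiv (wnorm (fun t => exp (Ropp (V t))) (derivn p (pi_ n)))
             (wnorm (fun t => exp (Ropp (V t))) (pi_ n))))
    (Rbar.Finite R1).
Proof.
move=> hk HV Hop.
have hk1 : (1 <= k)%N by apply: leq_trans hk; rewrite addn1.
have HVc := V_cont hk1 HV.
have Hw : Cont (fun t => exp (Ropp (V t))) := w_cont HVc.
have [a [b [Ha Hab]]] := weight_bounds HVc.
have Ha' : (0 < a)%R by apply/RltP.
have Hab' : forall t, Rle (Ropp PI) t -> Rle t PI -> (a <= exp (Ropp (V t)) <= b)%R.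
  by move=> t h1 h2; have [h3 h4] := Hab t h1 h2; apply/andP; split; apply/RleP.
exact: (main_gen Hw Ha' Hab' Hop p).
Qed.
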